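(* Let $g=v+h$ be an s-warped spacetime whose Weyl tensor is $W=\rho(3S+G)$ with $S=U\otimes U-*U\otimes *U$, where $U$ is the time-like unitary 2-form with $U^2=v$, and suppose the Ricci tensor has the form $R=A+\mu h$ with $A$ symmetric and $A\cdot h=0$. Then $$B\equiv R-S[R]-\tfrac12\mathrm r\,g=\beta\,\Pi,\qquad \Pi\equiv v-h,\qquad \beta\equiv\tfrac12\mathrm r-2\mu .$$ Consequently $\mu=\frac14\mathrm r-\frac12\beta$, with $\beta=0$ if $B=0$ and, if $B\neq0$, $\beta=\frac{\epsilon}{2}\sqrt{\operatorname{tr}B^2}$ where $\epsilon=-B(x,x)/|B(x,x)|$ for any unit time-like vector $x$.
   Context: $(M,g)$ is an oriented 4-dimensional spacetime of signature $(-,+,+,+)$, volume element $\eta$, Ricci tensor $R$, scalar curvature $\mathrm r=\operatorname{tr}R$. s-warped: locally $g=v+e^{2\lambda}\hat h$ on a product of a 2-dimensional Lorentzian factor (metric $v$) and a 2-dimensional Riemannian factor (metric $\hat h$), $\lambda$ a function on the Lorentzian factor; $h=e^{2\lambda}\hat h$; $v$ and $h$ are viewed as the orthogonal projectors onto the time-like plane V and space-like plane H. Notation: $(A\cdot B)^\alpha{}_\beta=A^\alpha{}_\mu B^\mu{}_\beta$, $A^2=A\cdot A$, $\operatorname{tr}A=A^\alpha{}_\alpha$, $A(x,x)=A_{\alpha\beta}x^\alpha x^\beta$; $*U=\eta(U)$, $( *U)_{\alpha\beta}=\frac12\eta_{\alpha\beta}{}^{\mu\nu}U_{\mu\nu}$;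 $(U\otimes U)_{\alpha\beta\mu\nu}=U_{\alpha\beta}U_{\mu\nu}$; $(A\wedge B)_{\alpha\beta\mu\nu}=A_{\alpha\mu}B_{\beta\nu}+A_{\beta\nu}B_{\alpha\mu}-A_{\alpha\nu}B_{\beta\mu}-A_{\beta\mu}B_{\alpha\nu}$, $G=\frac12g\wedge g$; for a double 2-form $P$ and symmetric 2-tensor $B$, $P[B]_{\alpha\beta}=P_\alpha{}^\mu{}_\beta{}^\nu B_{\mu\nu}$; for double 2-forms $\operatorname{tr}$ is not used here, $\operatorname{tr}B^2=B^\alpha{}_\mu B^\mu{}_\alpha$. A unit time-like vector satisfies $x^2=-1$. *)

(* Defs.v *)
(* Pointwise (tangent space at a point) tensor algebra in dimension 4.
   Tensors are given by their components (all indices down) in an arbitrary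
   coordinate basis; indices range over 0..3 (values at other indices are
   irrelevant: all tensor equalities are only required for indices < 4). *)
From Stdlib Require Import Reals.
Open Scope R_scope.

Definition T2 := nat -> nat -> R.
Definition T4 := nat -> nat -> nat -> nat -> R.

Definition sum4 (f : nat -> R) : R := f 0%nat + f 1%nat + f 2%nat + f 3%nat.

Definition teq2 (A B : T2) : Prop :=
  forall a b, (a < 4)%nat -> (b < 4)%nat -> A a b = B a b.
Definition teq4 (P Q : T4) : Prop :=
  forall a b c d, (a < 4)%nat -> (b < 4)%nat -> (c < 4)%nat -> (d < 4)%nat ->
    P a b c d = Q a b c d.

Definition zero2 : T2 := fun _ _ => 0.
Definition add2 (A B : T2) : T2 := fun a b => A a b + B a b.
Definition sub2 (A B : T2) : T2 := fun a b => A a b - B a b.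
Definition scal2 (k : R) (A : T2) : T2 := fun a b => k * A a b.
Definition add4 (P Q : T4) : T4 := fun a b c d => P a b c d + Q a b c d.
Definition sub4 (P Q : T4) : T4 := fun a b c d => P a b c d - Q a b c d.
Definition scal4 (k : R) (P : T4) : T4 := fun a b c d => k * P a b c d.

Definition symmetric2 (A : T2) : Prop := forall a b, (a < 4)%nat -> (b < 4)%nat -> A a b = A b a.
Definition antisymmetric2 (A : T2) : Prop := forall a b, (a < 4)%nat -> (b < 4)%nat -> A a b = - A b a.

Definition is_inverse (gi g : T2) : Prop :=
  forall a b, (a < 4)%nat -> (b < 4)%nat ->
    sum4 (fun m => gi a m * g m b) = if Nat.eqb a b then 1 else 0.

(* signature (-,+,+,+): g = E^T diag(-1,1,1,1) E for some frame matrix E *)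
Definition lorentzian_signature (g : T2) : Prop :=
  exists E : T2, teq2 g (fun a b =>
    - (E 0%nat a * E 0%nat b) + E 1%nat a * E 1%nat b + E 2%nat a * E 2%nat b + E 3%nat a * E 3%nat b).

(* (A.B)_{ab} = A_a^m B_{mb} *)
Definition dot (gi : T2) (A B : T2) : T2 :=
  fun a b => sum4 (fun m => sum4 (fun n => A a m * gi m n * B n b)).
Definition tr (gi : T2) (A : T2) : R := sum4 (fun a => sum4 (fun b => gi a b * A b a)).
Definition quad (A : T2) (x : nat -> R) : R :=
  sum4 (fun a => sum4 (fun b => A a b * x a * x b)).

(* Levi-Civita symbol, eps_{0123} = 1 *)
Definition sgnpair (i j : nat) : R :=
  if Nat.ltb i j then 1 else if Nat.eqb i j then 0 else -1.
Definition levi (a b c d : nat) : R :=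
  sgnpair a b * sgnpair a c * sgnpair a d * sgnpair b c * sgnpair b d * sgnpair c d.
Definition det4 (g : T2) : R :=
  sum4 (fun a => sum4 (fun b => sum4 (fun c => sum4 (fun d =>
    levi a b c d * g 0%nat a * g 1%nat b * g 2%nat c * g 3%nat d)))).
(* volume element (orientation of the coordinate basis) *)
Definition vol (g : T2) : T4 := fun a b c d => sqrt (Rabs (det4 g)) * levi a b c d.

Definition hodge (g gi : T2) (U : T2) : T2 :=
  fun a b => / 2 * sum4 (fun r => sum4 (fun s => sum4 (fun m => sum4 (fun n =>
    vol g a b r s * gi r m * gi s n * U m n)))).

Definition tprod (U V : T2) : T4 := fun a b c d => U a b * V c d.
Definition kn (A B : T2) : T4 := fun a b m n =>
  A a m * B b n + A b n * B a m - A a n * B b m - A b m * B a n.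
Definition Gt (g : T2) : T4 := scal4 (/ 2) (kn g g).
Definition Sdf (g gi U : T2) : T4 := sub4 (tprod U U) (tprod (hodge g gi U) (hodge g gi U)).
(* P[B]_{ab} = P_a^m_b^n B_{mn} *)
Definition act (gi : T2) (P : T4) (B : T2) : T2 :=
  fun a b => sum4 (fun r => sum4 (fun s => sum4 (fun m => sum4 (fun n =>
    P a r b s * gi r m * gi s n * B m n)))).

Definition curvature_symmetries (Rm : T4) : Prop :=
  forall a b c d, (a < 4)%nat -> (b < 4)%nat -> (c < 4)%nat -> (d < 4)%nat ->
    Rm a b c d = - Rm b a c d /\ Rm a b c d = - Rm a b d c /\
    Rm a b c d = Rm c d a b /\ Rm a b c d + Rm a c d b + Rm a d b c = 0.

Definition ricci (gi : T2) (Rm : T4) : T2 :=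
  fun b d => sum4 (fun a => sum4 (fun c => gi a c * Rm a b c d)).
Definition scal (gi : T2) (Rm : T4) : R := tr gi (ricci gi Rm).
(* Weyl tensor: Riem = W + 1/2 g /\ Ric - r/12 g /\ g *)
Definition weyl (g gi : T2) (Rm : T4) : T4 :=
  add4 (sub4 Rm (scal4 (/ 2) (kn g (ricci gi Rm))))
       (scal4 (scal gi Rm / 12) (kn g g)).

(* pointwise content of "s-warped, g = v + h": orthogonal splitting of the
   tangent space into a time-like 2-plane V (projector v) and a space-like
   2-plane H (projector h) *)
Definition swarped_split (g gi v h : T2) : Prop :=
  symmetric2 v /\ symmetric2 h /\ teq2 g (add2 v h) /\
  teq2 (dot gi v v) v /\ teq2 (dot gi h h) h /\ teq2 (dot gi v h) zero2 /\
  tr gi v = 2 /\ tr gi h = 2 /\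
  (exists x : nat -> R, quad v x < 0) /\ (forall x : nat -> R, 0 <= quad h x).

(* Main.v *)
Require Import Defs.
From Stdlib Require Import Reals Lra Lia Setoid Morphisms.
Open Scope R_scope.

Definition mm (A B : T2) : T2 := fun a b => sum4 (fun m => A a m * B m b).
Definition mT (A : T2) : T2 := fun a b => A b a.
Definition I4 : T2 := fun a b => if Nat.eqb a b then 1 else 0.
Definition trm (A : T2) : R := sum4 (fun a => A a a).
Definition eps (X : T2) : T2 := fun a b => sum4 (fun r => sum4 (fun s => levi a b r s * X r s)).
Definition detx (M : T2) : R := M 0%nat 0%nat * M 1%nat 1%nat * M 2%nat 2%nat * M 3%nat 3%nat - M 0%nat 0%nat * M 1%nat 1%nat * M 2%nat 3%nat * M 3%nat 2%nat - M 0%nat 0%nat * M 1%nat 2%nat * M 2%nat 1%nat * M 3%nat 3%nat + M 0%nat 0%nat * M 1%nat 2%nat * M 2%nat 3%nat * M 3%nat 1%nat + M 0%nat 0%nat * M 1%nat 3%nat * M 2%nat 1%nat * M 3%nat 2%nat - M 0%nat 0%nat * M 1%nat 3%nat * M 2%nat 2%nat * M 3%nat 1%nat - M 0%nat 1%nat * M 1%nat 0%nat * M 2%nat 2%nat * M 3%nat 3%nat + M 0%nat 1%nat * M 1%nat 0%nat * M 2%nat 3%nat * M 3%nat 2%nat + M 0%nat 1%nat * M 1%nat 2%nat * M 2%nat 0%nat * M 3%nat 3%nat - M 0%nat 1%nat * M 1%nat 2%nat * M 2%nat 3%nat * M 3%nat 0%nat - M 0%nat 1%nat * M 1%nat 3%nat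 * M 2%nat 0%nat * M 3%nat 2%nat + M 0%nat 1%nat * M 1%nat 3%nat * M 2%nat 2%nat * M 3%nat 0%nat + M 0%nat 2%nat * M 1%nat 0%nat * M 2%nat 1%nat * M 3%nat 3%nat - M 0%nat 2%nat * M 1%nat 0%nat * M 2%nat 3%nat * M 3%nat 1%nat - M 0%nat 2%nat * M 1%nat 1%nat * M 2%nat 0%nat * M 3%nat 3%nat + M 0%nat 2%nat * M 1%nat 1%nat * M 2%nat 3%nat * M 3%nat 0%nat + M 0%nat 2%nat * M 1%nat 3%nat * M 2%nat 0%nat * M 3%nat 1%nat - M 0%nat 2%nat * M 1%nat 3%nat * M 2%nat 1%nat * M 3%nat 0%nat - M 0%nat 3%nat * M 1%nat 0%nat * M 2%nat 1%nat * M 3%nat 2%nat + M 0%nat 3%nat * M 1%nat 0%nat * M 2%nat 2%nat * M 3%nat 1%nat + M 0%nat 3%nat * M 1%nat 1%nat * M 2%nat 0%nat * M 3%nat 2%nat - M 0%nat 3%nat * M 1%nat 1%nat * M 2%nat 2%nat * M 3%nat 0%nat - M 0%nat 3%nat * M 1%nat 2%nat * M 2%nat 0%nat * M 3%nat 1%nat + M 0%nat 3%nat * M 1%nat 2%nat * M 2%nat 1%nat * M 3%nat 0%nat.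
Definition epsx (X : T2) : T2 := fun a b =>
 match a, b with
 | 0%nat,1%nat => X 2%nat 3%nat - X 3%nat 2%nat | 1%nat,0%nat => X 3%nat 2%nat - X 2%nat 3%nat
 | 0%nat,2%nat => X 3%nat 1%nat - X 1%nat 3%nat | 2%nat,0%nat => X 1%nat 3%nat - X 3%nat 1%nat
 | 0%nat,3%nat => X 1%nat 2%nat - X 2%nat 1%nat | 3%nat,0%nat => X 2%nat 1%nat - X 1%nat 2%nat
 | 1%nat,2%nat => X 0%nat 3%nat - X 3%nat 0%nat | 2%nat,1%nat => X 3%nat 0%nat - X 0%nat 3%nat
 | 1%nat,3%nat => X 2%nat 0%nat - X 0%nat 2%nat | 3%nat,1%nat => X 0%nat 2%nat - X 2%nat 0%nat
 | 2%nat,3%nat => X 0%nat 1%nat - X 1%nat 0%nat | 3%nat,2%nat => X 1%nat 0%nat - X 0%nat 1%nat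
 | _,_ => 0 end.

Ltac idx a := destruct a as [|[|[|[|a]]]]; try lia.

Lemma det4_detx : forall M, det4 M = detx M.
Proof. intros. unfold det4, detx, sum4. cbv [levi sgnpair Nat.ltb Nat.leb Nat.eqb]. ring. Qed.

Lemma eps_epsx : forall X, teq2 (eps X) (epsx X).
Proof. intros X a b Ha Hb. unfold eps, sum4. idx a; idx b; cbv [epsx levi sgnpair Nat.ltb Nat.leb Nat.eqb]; ring. Qed.

Lemma sum4_ext : forall f f', (forall i, (i < 4)%nat -> f i = f' i) -> sum4 f = sum4 f'.
Proof. intros f f' H. unfold sum4. rewrite !H by lia. reflexivity. Qed.

#[export] Instance teq2_equiv : Equivalence teq2.
Proof. split.
- intros A a b _ _; reflexivity.
- intros A B H a b Ha Hb; symmetry; apply H; auto.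
- intros A B C H1 H2 a b Ha Hb; rewrite H1, H2; auto. Qed.

#[export] Instance mm_proper : Proper (teq2 ==> teq2 ==> teq2) mm.
Proof. intros A A' HA B B' HB a b Ha Hb. unfold mm. apply sum4_ext; intros.
 rewrite HA, HB; auto. Qed.
#[export] Instance mT_proper : Proper (teq2 ==> teq2) mT.
Proof. intros A A' HA a b Ha Hb. unfold mT. apply HA; auto. Qed.
#[export] Instance add2_proper : Proper (teq2 ==> teq2 ==> teq2) add2.
Proof. intros A A' HA B B' HB a b Ha Hb. unfold add2. rewrite HA, HB; auto. Qed.
#[export] Instance sub2_proper : Proper (teq2 ==> teq2 ==> teq2) sub2.
Proof. intros A A' HA B B' HB a b Ha Hb. unfold sub2. rewrite HA, HB; auto. Qed.
#[export] Instance scal2_proper : Proper (eq ==> teq2 ==> teq2) scal2.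
Proof. intros k k' -> B B' HB a b Ha Hb. unfold scal2. rewrite HB; auto. Qed.
#[export] Instance trm_proper : Proper (teq2 ==> eq) trm.
Proof. intros A A' HA. unfold trm. apply sum4_ext; intros. apply HA; auto. Qed.
#[export] Instance detx_proper : Proper (teq2 ==> eq) detx.
Proof. intros A A' HA. unfold detx. rewrite !HA by lia. reflexivity. Qed.
#[export] Instance epsx_proper : Proper (teq2 ==> teq2) epsx.
Proof. intros A A' HA a b Ha Hb. idx a; idx b; simpl; rewrite ?HA by lia; reflexivity. Qed.

Ltac pt := let a := fresh "a" in let b := fresh "b" in
  intros a b ? ?; unfold mm, mT, add2, sub2, scal2, zero2, sum4; unfold Rdiv; ring.

Lemma mm_assoc : forall A B C, teq2 (mm (mm A B) C) (mm A (mm B C)). Proof. intros; pt. Qed.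
Lemma mm_addl : forall A B C, teq2 (mm (add2 A B) C) (add2 (mm A C) (mm B C)). Proof. intros; pt. Qed.
Lemma mm_addr : forall A B C, teq2 (mm C (add2 A B)) (add2 (mm C A) (mm C B)). Proof. intros; pt. Qed.
Lemma mm_subl : forall A B C, teq2 (mm (sub2 A B) C) (sub2 (mm A C) (mm B C)). Proof. intros; pt. Qed.
Lemma mm_subr : forall A B C, teq2 (mm C (sub2 A B)) (sub2 (mm C A) (mm C B)). Proof. intros; pt. Qed.
Lemma mm_scall : forall k A B, teq2 (mm (scal2 k A) B) (scal2 k (mm A B)). Proof. intros; pt. Qed.
Lemma mm_scalr : forall k A B, teq2 (mm A (scal2 k B)) (scal2 k (mm A B)). Proof. intros; pt. Qed.
Lemma mm_zerol : forall A, teq2 (mm zero2 A) zero2. Proof. intros; pt. Qed.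
Lemma mm_zeror : forall A, teq2 (mm A zero2) zero2. Proof. intros; pt. Qed.
Lemma mm_I4l : forall A, teq2 (mm I4 A) A.
Proof. intros A a b Ha Hb. unfold mm, I4, sum4. idx a; simpl; ring. Qed.
Lemma mm_I4r : forall A, teq2 (mm A I4) A.
Proof. intros A a b Ha Hb. unfold mm, I4, sum4. idx b; simpl; ring. Qed.
Lemma mT_mm : forall A B, teq2 (mT (mm A B)) (mm (mT B) (mT A)). Proof. intros; pt. Qed.
Lemma mT_add : forall A B, teq2 (mT (add2 A B)) (add2 (mT A) (mT B)). Proof. intros; pt. Qed.
Lemma mT_sub : forall A B, teq2 (mT (sub2 A B)) (sub2 (mT A) (mT B)). Proof. intros; pt. Qed.
Lemma mT_scal : forall k A, teq2 (mT (scal2 k A)) (scal2 k (mT A)). Proof. intros; pt. Qed.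
Lemma mT_zero : teq2 (mT zero2) zero2. Proof. pt. Qed.
Lemma trm_add : forall A B, trm (add2 A B) = trm A + trm B. Proof. intros; unfold trm, add2, sum4; ring. Qed.
Lemma trm_sub : forall A B, trm (sub2 A B) = trm A - trm B. Proof. intros; unfold trm, sub2, sum4; ring. Qed.
Lemma trm_scal : forall k A, trm (scal2 k A) = k * trm A. Proof. intros; unfold trm, scal2, sum4; ring. Qed.
Lemma trm_zero : trm zero2 = 0. Proof. unfold trm, zero2, sum4; ring. Qed.
Lemma trm_I4 : trm I4 = 4. Proof. unfold trm, I4, sum4; simpl; ring. Qed.
Lemma trm_comm : forall A B, trm (mm A B) = trm (mm B A). Proof. intros; unfold trm, mm, sum4; ring. Qed.
Lemma trm_mT : forall A, trm (mT A) = trm A. Proof. intros; unfold trm, mT, sum4; ring. Qed.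

Lemma sym_mT : forall A, symmetric2 A -> teq2 (mT A) A.
Proof. intros A H a b Ha Hb. unfold mT. symmetry; apply H; auto. Qed.
Lemma asym_mT : forall A, antisymmetric2 A -> teq2 (mT A) (scal2 (-1) A).
Proof. intros A H a b Ha Hb. unfold mT, scal2. rewrite (H b a) by auto. ring. Qed.
Lemma dot_mm : forall gi A B, teq2 (dot gi A B) (mm (mm A gi) B).
Proof. intros; unfold dot; pt. Qed.
Lemma tr_trm : forall gi A, tr gi A = trm (mm gi A).
Proof. intros; unfold tr, trm, mm, sum4; ring. Qed.

Lemma act_sub : forall gi P Q B, teq2 (act gi (sub4 P Q) B) (sub2 (act gi P B) (act gi Q B)).
Proof. intros; unfold act, sub4; pt. Qed.
Lemma act_tprod : forall gi P Q B, teq2 (act gi (tprod P Q) B) (mm (mm (mm (mm P gi) B) (mT gi)) (mT Q)).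
Proof. intros; unfold act, tprod; pt. Qed.
Lemma hodge_eq : forall g gi U, teq2 (hodge g gi U) (scal2 (sqrt (Rabs (det4 g)) / 2) (eps (mm (mm gi U) (mT gi)))).
Proof. intros; unfold hodge, vol, eps; pt. Qed.

Lemma det_mult : forall A B, detx (mm A B) = detx A * detx B.
Proof. intros. unfold detx, mm, sum4. ring. Qed.

Lemma eps_transf : forall N X, teq2 (mm (mm (mT N) (epsx (mm (mm N X) (mT N)))) N) (scal2 (detx N) (epsx X)).
Proof. intros N X a b Ha Hb.
 unfold mm, mT, scal2, detx, sum4.
 idx a; idx b; simpl; ring. Qed.

Definition asm (U : T2) : T2 := fun a b =>
  if Nat.ltb a b then U a b else if Nat.eqb a b then 0 else - U b a.

Lemma asm_eq : forall U, antisymmetric2 U -> teq2 U (asm U).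
Proof. intros U H a b Ha Hb. pose proof (H a b Ha Hb) as Hab. unfold asm. idx a; idx b; simpl; lra. Qed.

Lemma E2a : forall U, teq2 (mm (epsx (asm U)) (asm U)) (scal2 (trm (mm (epsx (asm U)) (asm U)) / 4) I4).
Proof. intros U a b Ha Hb. unfold mm, trm, scal2, I4, sum4. idx a; idx b; cbv [asm epsx I4 Nat.ltb Nat.leb Nat.eqb]; field. Qed.

Lemma E3a : forall U K, teq2 (mm (epsx (asm U)) (epsx (asm K)))
  (add2 (scal2 (-4) (mm (asm K) (asm U))) (scal2 (2 * trm (mm (asm K) (asm U))) I4)).
Proof. intros U K a b Ha Hb. unfold mm, trm, scal2, add2, I4, sum4. idx a; idx b; cbv [asm epsx I4 Nat.ltb Nat.leb Nat.eqb]; ring. Qed.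

Lemma CH4 : forall M a b, (a<4)%nat -> (b<4)%nat ->
  let M2 := mm M M in let M3 := mm M M2 in let M4 := mm M M3 in
  let p1 := trm M in let p2 := trm M2 in let p3 := trm M3 in let p4 := trm M4 in
  M4 a b - p1 * M3 a b + (p1^2 - p2)/2 * M2 a b - (p1^3 - 3*p1*p2 + 2*p3)/6 * M a b
  + (p1^4 - 6*p1^2*p2 + 3*p2^2 + 8*p1*p3 - 6*p4)/24 * I4 a b = 0.
Proof. intros M a b Ha Hb. intros. subst M2 M3 M4 p1 p2 p3 p4.
 unfold mm, trm, I4, sum4.
 idx a; idx b; cbv [Nat.eqb]; field. Qed.

Lemma CH4P : forall M P a b, (a<4)%nat -> (b<4)%nat ->
  let M2 := mm M M in let M3 := mm M M2 in let M4 := mm M M3 in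
  let p1 := trm M in let p2 := trm M2 in let p3 := trm M3 in let p4 := trm M4 in
  mm M4 P a b - p1 * mm M3 P a b + (p1^2 - p2)/2 * mm M2 P a b - (p1^3 - 3*p1*p2 + 2*p3)/6 * mm M P a b
  + (p1^4 - 6*p1^2*p2 + 3*p2^2 + 8*p1*p3 - 6*p4)/24 * P a b = 0.
Proof. intros M P a b Ha Hb. intros.
 pose proof (CH4 M a 0 Ha ltac:(lia)) as H0.
 pose proof (CH4 M a 1 Ha ltac:(lia)) as H1.
 pose proof (CH4 M a 2 Ha ltac:(lia)) as H2.
 pose proof (CH4 M a 3 Ha ltac:(lia)) as H3.
 cbv zeta in *. fold M2 M3 M4 p1 p2 p3 p4 in H0, H1, H2, H3 |- *.
 set (c2 := (p1^2 - p2)/2) in *. set (c3 := (p1^3 - 3*p1*p2 + 2*p3)/6) in *.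
 set (c4 := (p1^4 - 6*p1^2*p2 + 3*p2^2 + 8*p1*p3 - 6*p4)/24) in *.
 assert (HP : P a b = sum4 (fun m => I4 a m * P m b)).
 { unfold I4, sum4. idx a; cbv [Nat.eqb]; ring. }
 rewrite HP. unfold mm at 1 2 3 4, sum4.
 transitivity ((M4 a 0%nat - p1 * M3 a 0%nat + c2 * M2 a 0%nat - c3 * M a 0%nat + c4 * I4 a 0%nat) * P 0%nat b
  + (M4 a 1%nat - p1 * M3 a 1%nat + c2 * M2 a 1%nat - c3 * M a 1%nat + c4 * I4 a 1%nat) * P 1%nat b
  + (M4 a 2%nat - p1 * M3 a 2%nat + c2 * M2 a 2%nat - c3 * M a 2%nat + c4 * I4 a 2%nat) * P 2%nat b
  + (M4 a 3%nat - p1 * M3 a 3%nat + c2 * M2 a 3%nat - c3 * M a 3%nat + c4 * I4 a 3%nat) * P 3%nat b).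
 - ring.
 - rewrite H0, H1, H2, H3. ring.
Qed.

Lemma mix_mult : forall M N D x y, teq2 (mm M D) zero2 -> teq2 (mm D N) zero2 -> teq2 (mm D D) D ->
  teq2 (mm (add2 M (scal2 x D)) (add2 N (scal2 y D))) (add2 (mm M N) (scal2 (x*y) D)).
Proof. intros M N D x y H1 H2 H3.
 rewrite mm_addl, !mm_addr, !mm_scall, !mm_scalr, H1, H2, H3.
 intros a b _ _; unfold add2, scal2, zero2; ring. Qed.

Lemma CH2 : forall X P, teq2 (mm P P) P -> trm P = 2 -> teq2 (mm X P) X -> teq2 (mm P X) X ->
  teq2 (add2 (sub2 (mm X X) (scal2 (trm X) X)) (scal2 ((trm X ^ 2 - trm (mm X X)) / 2) P)) zero2.
Proof.
 intros X P HPP HtP HXP HPX.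
 set (D := sub2 I4 P).
 assert (HXD : teq2 (mm X D) zero2).
 { unfold D. rewrite mm_subr, mm_I4r, HXP. intros a b _ _; unfold sub2, zero2; ring. }
 assert (HDX : teq2 (mm D X) zero2).
 { unfold D. rewrite mm_subl, mm_I4l, HPX. intros a b _ _; unfold sub2, zero2; ring. }
 assert (HDD : teq2 (mm D D) D).
 { unfold D. rewrite mm_subl, !mm_subr, !mm_I4l, !mm_I4r, HPP. intros a b _ _; unfold sub2. ring. }
 assert (HDP : teq2 (mm D P) zero2).
 { unfold D. rewrite mm_subl, mm_I4l, HPP. intros a b _ _; unfold sub2, zero2; ring. }
 assert (HtD : trm D = 2). { unfold D. rewrite trm_sub, trm_I4, HtP. ring. }
 set (X2 := mm X X). set (X3 := mm X X2). set (X4 := mm X X3).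
 assert (HX2D : teq2 (mm D X2) zero2). { unfold X2. rewrite <- mm_assoc, HDX, mm_zerol. reflexivity. }
 assert (HX3D : teq2 (mm D X3) zero2). { unfold X3. rewrite <- mm_assoc, HDX, mm_zerol. reflexivity. }
 assert (HX2P : teq2 (mm X2 P) X2). { unfold X2. rewrite mm_assoc, HXP. reflexivity. }
 assert (HX3P : teq2 (mm X3 P) X3). { unfold X3, X2. rewrite !mm_assoc, HXP. reflexivity. }
 assert (HX4P : teq2 (mm X4 P) X4). { unfold X4, X3, X2. rewrite !mm_assoc, HXP. reflexivity. }
 assert (Ht : forall t a b, (a<4)%nat -> (b<4)%nat ->
   let p1 := trm X + 2 * t in let p2 := trm X2 + 2 * t^2 in
   let p3 := trm X3 + 2 * t^3 in let p4 := trm X4 + 2 * t^4 in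
   X4 a b - p1 * X3 a b + (p1^2 - p2)/2 * X2 a b - (p1^3 - 3*p1*p2 + 2*p3)/6 * X a b
   + (p1^4 - 6*p1^2*p2 + 3*p2^2 + 8*p1*p3 - 6*p4)/24 * P a b = 0).
 { intros t a b Ha Hb. pose proof (CH4P (add2 X (scal2 t D)) P a b Ha Hb) as H.
   cbv zeta in H. set (Y := add2 X (scal2 t D)) in H.
   assert (E2 : teq2 (mm Y Y) (add2 X2 (scal2 (t*t) D))) by (apply mix_mult; auto).
   assert (E3 : teq2 (mm Y (mm Y Y)) (add2 X3 (scal2 (t*(t*t)) D)))
     by (rewrite E2; apply mix_mult; auto).
   assert (E4 : teq2 (mm Y (mm Y (mm Y Y))) (add2 X4 (scal2 (t*(t*(t*t))) D)))
     by (rewrite E3; apply mix_mult; auto).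
   assert (F : forall Z k, teq2 (mm Z P) Z -> teq2 (mm (add2 Z (scal2 k D)) P) Z).
   { intros Z k HZ. rewrite mm_addl, mm_scall, HDP, HZ. intros c d _ _; unfold add2, scal2, zero2. ring. }
   assert (K1 : teq2 (mm Y P) X) by (apply F; auto).
   assert (K2 : teq2 (mm (mm Y Y) P) X2) by (rewrite E2; apply F; auto).
   assert (K3 : teq2 (mm (mm Y (mm Y Y)) P) X3) by (rewrite E3; apply F; auto).
   assert (K4 : teq2 (mm (mm Y (mm Y (mm Y Y))) P) X4) by (rewrite E4; apply F; auto).
   assert (T1 : trm Y = trm X + 2 * t) by (unfold Y; rewrite trm_add, trm_scal, HtD; ring).
   assert (T2 : trm (mm Y Y) = trm X2 + 2 * t^2) by (rewrite E2, trm_add, trm_scal, HtD; ring).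
   assert (T3 : trm (mm Y (mm Y Y)) = trm X3 + 2 * t^3) by (rewrite E3, trm_add, trm_scal, HtD; ring).
   assert (T4 : trm (mm Y (mm Y (mm Y Y))) = trm X4 + 2 * t^4) by (rewrite E4, trm_add, trm_scal, HtD; ring).
   rewrite (K1 a b Ha Hb), (K2 a b Ha Hb), (K3 a b Ha Hb), (K4 a b Ha Hb), T1, T2, T3, T4 in H.
   exact H. }
 intros a b Ha Hb.
 pose proof (Ht 0 a b Ha Hb) as T0. pose proof (Ht 1 a b Ha Hb) as T1.
 pose proof (Ht (-1) a b Ha Hb) as Tm1. pose proof (Ht 2 a b Ha Hb) as T2.
 pose proof (Ht (-2) a b Ha Hb) as Tm2. cbv zeta in *.
 unfold add2, sub2, scal2, zero2. fold X2.
 lra.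
Qed.

Ltac lin := let a := fresh "a" in let b := fresh "b" in
  intros a b ? ?; unfold add2, sub2, scal2, zero2; ring.

Lemma tail3 : forall A B C D, teq2 (mm (mm A B) C) D -> forall X, teq2 (mm A (mm B (mm C X))) (mm D X).
Proof. intros. rewrite <- !mm_assoc, H. reflexivity. Qed.
Lemma tail2 : forall A B D, teq2 (mm A B) D -> forall X, teq2 (mm A (mm B X)) (mm D X).
Proof. intros. rewrite <- !mm_assoc, H. reflexivity. Qed.

Lemma mT_I4 : teq2 (mT I4) I4.
Proof. intros a b Ha Hb. unfold mT, I4. rewrite PeanoNat.Nat.eqb_sym. reflexivity. Qed.

Lemma gG_inv : forall g G, teq2 (mT g) g -> teq2 (mT G) G -> teq2 (mm G g) I4 -> teq2 (mm g G) I4.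
Proof. intros g G Hg HG H. rewrite <- Hg, <- HG, <- mT_mm, H. apply mT_I4. Qed.

Definition unitv (a : nat) : nat -> R := fun i => if Nat.eqb i a then 1 else 0.

Lemma psd_zero : forall h y, symmetric2 h -> (forall x, 0 <= quad h x) -> quad h y = 0 ->
  forall a, (a < 4)%nat -> sum4 (fun b => h a b * y b) = 0.
Proof.
 intros h y Hs Hp Hy a Ha.
 set (be := sum4 (fun b => h a b * y b)).
 assert (Hc : 0 <= h a a).
 { pose proof (Hp (unitv a)) as H. unfold quad, unitv, sum4 in H. idx a; cbv [Nat.eqb] in H; lra. }
 assert (Hq : forall t, quad h (fun i => y i + t * unitv a i) =
   quad h y + t * (sum4 (fun b => h a b * y b) + sum4 (fun b => h b a * y b)) + t^2 * h a a).
 { intros t. unfold quad, unitv, sum4. idx a; cbv [Nat.eqb]; ring. }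
 assert (Hsym : sum4 (fun b => h b a * y b) = be).
 { unfold be. apply sum4_ext. intros i Hi. rewrite (Hs i a) by auto. reflexivity. }
 set (c := h a a) in *.
 set (t := - be / (c + 1)).
 pose proof (Hp (fun i => y i + t * unitv a i)) as H. rewrite Hq, Hsym, Hy in H. fold be in H.
 assert (Hc1 : c + 1 > 0) by lra.
 assert (H2 : 0 <= (c+1)^2 * (0 + t * (be + be) + t ^ 2 * c)) by (apply Rmult_le_pos; [nra | lra]).
 assert (H3 : (c+1)^2 * (0 + t * (be + be) + t ^ 2 * c) = - be^2 * (c + 2)) by (unfold t; field; lra).
 rewrite H3 in H2. nra.
Qed.

Lemma U_in_V : forall g G v h U, symmetric2 h -> (forall x, 0 <= quad h x) ->
 teq2 (mT G) G -> teq2 (mm G g) I4 -> teq2 (mm g G) I4 -> teq2 g (add2 v h) ->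
 teq2 (mm (mm h G) h) h -> teq2 (mm (mm v G) h) zero2 ->
 teq2 (mT U) (scal2 (-1) U) -> teq2 (mm (mm U G) U) v ->
 teq2 (mm (mm U G) h) zero2.
Proof.
 intros g G v h U Hhs Hpsd HGs HGg HgG Hgvh Hhh Hvh HUa HUU.
 assert (HhT : teq2 (mT h) h) by (apply sym_mT; auto).
 assert (Hh : teq2 h (sub2 g v)). { intros a b Ha Hb. unfold sub2. rewrite (Hgvh a b Ha Hb). unfold add2. ring. }
 assert (UGg : teq2 (mm (mm U G) g) U) by (rewrite mm_assoc, HGg, mm_I4r; reflexivity).
 assert (gGU : teq2 (mm (mm g G) U) U) by (rewrite HgG, mm_I4l; reflexivity).
 assert (D3 : teq2 (mm (mm U G) v) (mm (mm v G) U)).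
 { rewrite <- HUU. rewrite !mm_assoc. reflexivity. }
 assert (D4 : teq2 (mm (mm U G) h) (mm (mm h G) U)).
 { rewrite Hh. rewrite mm_subr, !mm_subl, UGg, gGU, D3. reflexivity. }
 set (N := mm (mm U G) h).
 assert (NT : teq2 (mT N) (scal2 (-1) N)).
 { unfold N. rewrite !mT_mm, HUa, HGs, HhT, !mm_scalr, <- mm_assoc, <- D4. reflexivity. }
 assert (hGN : teq2 (mm (mm h G) N) N).
 { unfold N. rewrite D4. rewrite !mm_assoc. rewrite (tail3 _ _ _ _ Hhh). reflexivity. }
 assert (NGN : teq2 (mm (mm N G) N) zero2).
 { unfold N at 2. rewrite D4. unfold N. rewrite !mm_assoc.
   rewrite (tail3 _ _ _ _ Hhh).
   rewrite <- (mm_assoc h G U), <- D4. rewrite !mm_assoc.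
   rewrite (tail3 _ _ _ _ HUU). rewrite <- mm_assoc, Hvh. reflexivity. }
 assert (Q0 : teq2 (mm (mm (mT (mm G N)) h) (mm G N)) zero2).
 { rewrite mT_mm, NT, HGs, mm_scall, mm_scall, mm_scall.
   rewrite !mm_assoc. rewrite <- (mm_assoc h G N), hGN.
   rewrite <- mm_assoc, NGN. intros a b _ _. unfold scal2, zero2; ring. }
 fold N. intros a j Ha Hj.
 set (y := fun b => mm G N b j).
 assert (Hy : quad h y = 0).
 { transitivity (mm (mm (mT (mm G N)) h) (mm G N) j j).
   - unfold quad, y, mm, mT, sum4. ring.
   - rewrite (Q0 j j Hj Hj). reflexivity. }
 pose proof (psd_zero h y Hhs Hpsd Hy a Ha) as Hz.
 rewrite <- (hGN a j Ha Hj). rewrite mm_assoc by auto.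
 unfold zero2. rewrite <- Hz. unfold mm at 1, y. reflexivity.
Qed.

Lemma trm_anti : forall G U, teq2 (mT G) G -> teq2 (mT U) (scal2 (-1) U) -> trm (mm G U) = 0.
Proof. intros G U HG HU. assert (trm (mm G U) = - trm (mm G U)).
 { rewrite <- trm_mT at 1. rewrite mT_mm, HU, HG, mm_scall, trm_scal, trm_comm. ring. } lra. Qed.

Lemma polar : forall P a u, teq2 (mm P P) P -> trm P = 2 ->
  teq2 (mm a P) a -> teq2 (mm P a) a -> teq2 (mm u P) u -> teq2 (mm P u) u ->
  teq2 (add2 (sub2 (add2 (mm a u) (mm u a)) (add2 (scal2 (trm a) u) (scal2 (trm u) a)))
          (scal2 (trm a * trm u - trm (mm a u)) P)) zero2.
Proof. intros P a u HPP HtP HaP HPa HuP HPu.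
 pose proof (CH2 a P HPP HtP HaP HPa) as Ca.
 pose proof (CH2 u P HPP HtP HuP HPu) as Cu.
 assert (HXP : teq2 (mm (add2 a u) P) (add2 a u)) by (rewrite mm_addl, HaP, HuP; reflexivity).
 assert (HPX : teq2 (mm P (add2 a u)) (add2 a u)) by (rewrite mm_addr, HPa, HPu; reflexivity).
 pose proof (CH2 (add2 a u) P HPP HtP HXP HPX) as Cau.
 rewrite mm_addl, !mm_addr, !trm_add in Cau. pose proof (trm_comm u a) as Hc.
 intros i j Hi Hj. specialize (Ca i j Hi Hj). specialize (Cu i j Hi Hj). specialize (Cau i j Hi Hj).
 rewrite Hc in Cau. unfold add2, sub2, scal2, zero2 in *. lra.
Qed.

Lemma neg_inj : forall X Y, teq2 (scal2 (-1) X) (scal2 (-1) Y) -> teq2 X Y.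
Proof. intros X Y H a b Ha Hb. specialize (H a b Ha Hb). unfold scal2 in H. lra. Qed.

Lemma gG_cancel : forall g G X, teq2 (mm g G) I4 -> teq2 (mm g (mm G X)) X.
Proof. intros. rewrite <- mm_assoc, H, mm_I4l. reflexivity. Qed.

Lemma Usand : forall g G v h U A,
 teq2 (mT G) G -> teq2 (mm G g) I4 -> teq2 (mm g G) I4 -> teq2 g (add2 v h) -> teq2 (mT v) v ->
 teq2 (mm (mm v G) v) v -> trm (mm G v) = 2 ->
 teq2 (mT U) (scal2 (-1) U) -> teq2 (mm (mm U G) U) v -> teq2 (mm (mm U G) h) zero2 ->
 teq2 (mT A) A -> teq2 (mm (mm A G) h) zero2 ->
 teq2 (mm (mm (mm (mm U G) A) (mT G)) (mT U)) (sub2 A (scal2 (trm (mm G A)) v)).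
Proof.
 intros g G v h U A HGs HGg HgG Hgvh HvT Hvv Htv HUa HUU HUh HAT HAh.
 assert (Hv : teq2 v (sub2 g h)). { intros a b Ha Hb. unfold sub2. rewrite (Hgvh a b Ha Hb). unfold add2. ring. }
 assert (UGv : teq2 (mm (mm U G) v) U).
 { rewrite Hv, mm_subr, HUh, mm_assoc, HGg, mm_I4r. lin. }
 assert (AGv : teq2 (mm (mm A G) v) A).
 { rewrite Hv, mm_subr, HAh, mm_assoc, HGg, mm_I4r. lin. }
 assert (vGU : teq2 (mm (mm v G) U) U).
 { pose proof (mT_proper _ _ UGv) as T. rewrite !mT_mm, HvT, HGs, HUa, !mm_scalr in T.
   apply neg_inj. rewrite mm_assoc. exact T. }
 assert (vGA : teq2 (mm (mm v G) A) A).
 { pose proof (mT_proper _ _ AGv) as T. rewrite !mT_mm, HvT, HGs, HAT in T.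
   rewrite mm_assoc. exact T. }
 set (P := mm G v). set (a := mm G A). set (u := mm G U).
 assert (HPP : teq2 (mm P P) P).
 { unfold P. rewrite !mm_assoc, <- (mm_assoc v G v), Hvv. reflexivity. }
 assert (HaP : teq2 (mm a P) a). { unfold a, P. rewrite !mm_assoc, <- (mm_assoc A G v), AGv. reflexivity. }
 assert (HPa : teq2 (mm P a) a). { unfold a, P. rewrite !mm_assoc, <- (mm_assoc v G A), vGA. reflexivity. }
 assert (HuP : teq2 (mm u P) u). { unfold u, P. rewrite !mm_assoc, <- (mm_assoc U G v), UGv. reflexivity. }
 assert (HPu : teq2 (mm P u) u). { unfold u, P. rewrite !mm_assoc, <- (mm_assoc v G U), vGU. reflexivity. }
 assert (Huu : teq2 (mm u u) P). { unfold u, P. rewrite !mm_assoc, <- (mm_assoc U G U), HUU. reflexivity. }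
 pose proof (polar P a u HPP Htv HaP HPa HuP HPu) as Hpol.
 assert (Htu : trm u = 0) by (apply trm_anti; auto).
 assert (Htau : trm (mm a u) = 0).
 { unfold a, u. rewrite <- mm_assoc. apply trm_anti; auto.
   rewrite !mT_mm, HGs, HAT, mm_assoc. reflexivity. }
 rewrite Htu, Htau in Hpol.
 assert (Hac : teq2 (mm u a) (sub2 (scal2 (trm a) u) (mm a u))).
 { intros i j Hi Hj. specialize (Hpol i j Hi Hj). unfold add2, sub2, scal2, zero2 in *. lra. }
 assert (Huau : teq2 (mm (mm u a) u) (sub2 (scal2 (trm a) P) a)).
 { rewrite Hac, mm_subl, mm_scall, mm_assoc, Huu, HaP. reflexivity. }
 assert (Hcore : teq2 (mm (mm (mm (mm U G) A) G) U) (sub2 (scal2 (trm a) v) A)).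
 { rewrite <- (gG_cancel g G (mm (mm (mm (mm U G) A) G) U) HgG).
   assert (E : teq2 (mm G (mm (mm (mm (mm U G) A) G) U)) (mm (mm u a) u)).
   { unfold u, a. rewrite !mm_assoc. reflexivity. }
   rewrite E, Huau. unfold P, a. rewrite mm_subr, mm_scalr, !gG_cancel by auto. reflexivity. }
 rewrite HGs, HUa, mm_scalr, Hcore. fold a. lin.
Qed.

Lemma epsx_mT : forall X, teq2 (mT (epsx X)) (scal2 (-1) (epsx X)).
Proof. intros X a b Ha Hb. idx a; idx b; cbv [epsx mT scal2]; ring. Qed.

Lemma detx_I4 : detx I4 = 1.
Proof. unfold detx, I4. cbv [Nat.eqb]. ring. Qed.

Lemma W_facts : forall g G v h U,
 teq2 (mT g) g -> teq2 (mT G) G -> teq2 (mm G g) I4 -> teq2 (mm g G) I4 -> teq2 g (add2 v h) ->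
 teq2 (mm (mm v G) h) zero2 -> trm (mm G v) = 2 -> trm (mm G h) = 2 ->
 antisymmetric2 U -> teq2 (mm (mm U G) U) v -> teq2 (mm (mm U G) h) zero2 ->
 detx g < 0 -> detx G * detx g = 1 ->
 let W := hodge g G U in
 teq2 (mm (mm W G) v) zero2 /\ teq2 (mm (mm W G) W) (scal2 (-1) h) /\ teq2 (mT W) (scal2 (-1) W).
Proof.
 intros g G v h U HgT HGs HGg HgG Hgvh Hvh Htv Hth HUas HUU HUh Hdg HdGg W.
 assert (HUa : teq2 (mT U) (scal2 (-1) U)) by (apply asym_mT; auto).
 set (s := sqrt (Rabs (det4 g))).
 assert (HW0 : teq2 W (scal2 (s/2) (epsx (mm (mm G U) G)))).
 { unfold W. rewrite hodge_eq, eps_epsx, HGs. reflexivity. }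
 assert (HE1 : teq2 (epsx (mm (mm G U) G)) (scal2 (detx G) (mm (mm g (epsx U)) g))).
 { pose proof (eps_transf G U) as H. rewrite HGs in H.
   rewrite <- (gG_cancel g G (epsx (mm (mm G U) G)) HgG).
   transitivity (mm g (mm (mm G (mm (epsx (mm (mm G U) G)) G)) g)).
   - rewrite !mm_assoc. rewrite HGg, mm_I4r. reflexivity.
   - rewrite mm_assoc in H. rewrite H. rewrite mm_scall, mm_scalr. rewrite mm_assoc. reflexivity. }
 set (c := s / 2 * detx G).
 assert (HW : teq2 W (scal2 c (mm (mm g (epsx U)) g))).
 { rewrite HW0, HE1. intros a b _ _. unfold scal2, c. ring. }
 assert (HWT : teq2 (mT W) (scal2 (-1) W)).
 { rewrite HW, mT_scal, !mT_mm, HgT, epsx_mT, ?mm_scall, ?mm_scalr, ?mm_scall, ?mm_scalr. rewrite mm_assoc. lin. }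
 set (k := trm (mm (epsx (asm U)) (asm U)) / 4).
 assert (HUasm : teq2 U (asm U)) by (apply asm_eq; auto).
 assert (HeU : teq2 (mm (epsx U) U) (scal2 k I4)).
 { rewrite HUasm at 1 2. apply E2a. }
 assert (HWGU : teq2 (mm (mm W G) U) (scal2 (c * k) g)).
 { rewrite HW, !mm_scall, !mm_assoc, (tail2 _ _ _ HgG), mm_I4l.
   rewrite HeU, mm_scalr, mm_I4r. intros a b _ _. unfold scal2. ring. }
 assert (Hck : c * k = 0).
 { assert (H1 : teq2 (mm (mm (mm (mm W G) U) G) h) (scal2 (c*k) h)).
   { rewrite HWGU, mm_scall, mm_scall, HgG, mm_I4l. reflexivity. }
   assert (H2 : teq2 (mm (mm (mm (mm W G) U) G) h) zero2).
   { rewrite (mm_assoc (mm W G) U G), mm_assoc, HUh, mm_zeror. reflexivity. }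
   rewrite H1 in H2. pose proof (trm_proper _ _ (mm_proper _ _ (reflexivity G) _ _ H2)) as H3.
   rewrite mm_scalr, trm_scal, Hth, mm_zeror, trm_zero in H3. lra. }
 assert (HWGv : teq2 (mm (mm W G) v) zero2).
 { rewrite <- HUU. rewrite <- !mm_assoc, HWGU, Hck. intros a b _ _. unfold mm, scal2, zero2, sum4. ring. }
 split; [exact HWGv|]. split; [|exact HWT].
 set (K := mm (mm G U) G).
 assert (HKa : antisymmetric2 K).
 { intros a b Ha Hb. pose proof (mT_proper _ _ (reflexivity K)) as T.
   assert (T2 : teq2 (mT K) (scal2 (-1) K)).
   { unfold K. rewrite !mT_mm, HGs, HUa, ?mm_scall, ?mm_scalr, ?mm_scall, mm_assoc. reflexivity. }
   specialize (T2 b a Hb Ha). unfold mT, scal2 in T2. lra. }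
 assert (HgKg : teq2 (mm (mm g K) g) U).
 { unfold K. rewrite !mm_assoc, (tail2 _ _ _ HgG), mm_I4l, HGg, mm_I4r. reflexivity. }
 assert (HEU : teq2 (epsx U) (scal2 (detx g) (mm (mm G (epsx K)) G))).
 { pose proof (eps_transf g K) as H. rewrite HgT, HgKg in H.
   rewrite <- (gG_cancel G g (epsx U) HGg).
   transitivity (mm G (mm (mm g (mm (epsx U) g)) G)).
   - rewrite !mm_assoc. rewrite HgG, mm_I4r. reflexivity.
   - rewrite mm_assoc in H. rewrite H. rewrite mm_scall, mm_scalr. rewrite mm_assoc. reflexivity. }
 assert (HKasm : teq2 K (asm K)) by (apply asm_eq; auto).
 assert (HE3 : teq2 (mm (epsx U) (epsx K)) (add2 (scal2 (-4) (mm K U)) (scal2 (2 * trm (mm K U)) I4))).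
 { rewrite HUasm, HKasm. apply E3a. }
 assert (HKU : teq2 (mm K U) (mm G v)).
 { unfold K. rewrite !mm_assoc, <- (mm_assoc U G U), HUU. reflexivity. }
 rewrite HKU, Htv in HE3.
 assert (HeGe : teq2 (mm (mm (epsx U) g) (epsx U)) (scal2 (detx g) (add2 (scal2 (-4) (mm (mm G v) G)) (scal2 4 G)))).
 { rewrite HEU at 2. rewrite mm_scalr, !mm_assoc, (tail2 _ _ _ HgG), mm_I4l.
   rewrite <- mm_assoc, HE3, mm_addl, !mm_scall, mm_I4l. rewrite !mm_assoc. intros a b _ _. unfold scal2, add2. ring. }
 assert (Hss : s * s = - detx g).
 { unfold s. rewrite sqrt_sqrt by apply Rabs_pos. rewrite det4_detx, Rabs_left; auto. }
 rewrite HW. rewrite mm_scall, mm_scall, mm_scalr.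
 transitivity (scal2 (c * c) (mm g (mm (mm (mm (epsx U) g) (epsx U)) g))).
 { rewrite !mm_assoc. rewrite (tail2 _ _ _ HgG), mm_I4l. intros a b _ _. unfold scal2. ring. }
 rewrite HeGe. rewrite ?mm_scall, ?mm_scalr, ?mm_addl, ?mm_addr, ?mm_scall, ?mm_scalr, ?mm_scall, ?mm_scalr.
 rewrite !mm_assoc, !(tail2 _ _ _ HgG), HGg, !mm_I4l, mm_I4r.
 intros a b Ha Hb. unfold scal2 at 1 2 3 4, add2 at 1. rewrite (Hgvh a b Ha Hb). unfold scal2, add2.
 assert (Hc2 : c * c * detx g * 4 = -1).
 { unfold c. replace (s / 2 * detx G * (s / 2 * detx G) * detx g * 4) with ((s*s) * (detx G * detx G) * detx g) by field.
   rewrite Hss. replace (- detx g * (detx G * detx G) * detx g) with (- ((detx G * detx g) * (detx G * detx g))) by ring.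
   rewrite HdGg. ring. }
 transitivity (c * c * detx g * 4 * h a b); [ring | rewrite Hc2; ring].
Qed.

Definition eta4 : T2 := fun a b => if Nat.eqb a b then (if Nat.eqb a 0 then -1 else 1) else 0.

Lemma det_facts : forall g G, lorentzian_signature g -> teq2 (mm G g) I4 ->
  detx g < 0 /\ detx G * detx g = 1.
Proof.
 intros g G [E HE] HGg.
 assert (H1 : detx G * detx g = 1).
 { rewrite <- det_mult, HGg. apply detx_I4. }
 split; [|exact H1].
 assert (Hg : teq2 g (mm (mm (mT E) eta4) E)).
 { rewrite HE. intros a b _ _. unfold mm, mT, eta4, sum4. cbv [Nat.eqb]. ring. }
 assert (Hd : detx g = - (detx E * detx E)).
 { rewrite Hg, !det_mult.
   assert (detx (mT E) = detx E) by (unfold detx, mT; ring).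
   assert (detx eta4 = -1) by (unfold detx, eta4; cbv [Nat.eqb]; ring).
   rewrite H, H0. ring. }
 assert (detx g <> 0). { intro Z. rewrite Z in H1. lra. }
 assert (0 <= detx E * detx E) by nra. lra.
Qed.

#[export] Instance act_proper : Proper (eq ==> eq ==> teq2 ==> teq2) act.
Proof. intros gi gi' -> P P' -> B B' HB a b Ha Hb. unfold act.
 apply sum4_ext; intros; apply sum4_ext; intros; apply sum4_ext; intros; apply sum4_ext; intros.
 rewrite HB; auto. Qed.

Lemma quad_ext : forall A A' x, teq2 A A' -> quad A x = quad A' x.
Proof. intros. unfold quad. apply sum4_ext; intros; apply sum4_ext; intros. rewrite H; auto. Qed.
Lemma quad_sub : forall A B x, quad (sub2 A B) x = quad A x - quad B x.
Proof. intros; unfold quad, sub2, sum4; ring. Qed.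
Lemma quad_add : forall A B x, quad (add2 A B) x = quad A x + quad B x.
Proof. intros; unfold quad, add2, sum4; ring. Qed.
Lemma quad_scal : forall k A x, quad (scal2 k A) x = k * quad A x.
Proof. intros; unfold quad, scal2, sum4; ring. Qed.

Theorem mainTheorem10 :
  forall (g gi : T2) (Rm : T4) (v h U A : T2) (mu rho : R),
    symmetric2 g -> symmetric2 gi -> is_inverse gi g -> lorentzian_signature g ->
    curvature_symmetries Rm ->
    swarped_split g gi v h ->
    antisymmetric2 U -> teq2 (dot gi U U) v ->
    teq4 (weyl g gi Rm) (scal4 rho (add4 (scal4 3 (Sdf g gi U)) (Gt g))) ->
    symmetric2 A -> teq2 (dot gi A h) zero2 ->
    teq2 (ricci gi Rm) (add2 A (scal2 mu h)) ->
    let Ric := ricci gi Rm in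
    let r := scal gi Rm in
    let B := sub2 (sub2 Ric (act gi (Sdf g gi U) Ric)) (scal2 (r / 2) g) in
    let Pi := sub2 v h in
    let beta := r / 2 - 2 * mu in
    teq2 B (scal2 beta Pi) /\
    mu = r / 4 - beta / 2 /\
    (teq2 B zero2 -> beta = 0) /\
    (~ teq2 B zero2 ->
       forall x : nat -> R, quad g x = -1 ->
         let eps := - quad B x / Rabs (quad B x) in
         beta = eps / 2 * sqrt (tr gi (dot gi B B))).
Proof.
 intros g G Rm v h U A mu rho Hgs HGs0 Hinv Hsig _ Hsw HUas HUU0 _ HAs HAh0 HRic.
 intros Ric r B Pi beta.
 destruct Hsw as (Hvs & Hhs & Hgvh & Hvv0 & Hhh0 & Hvh0 & Htv0 & Hth0 & Hex & Hpsd).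
 rewrite dot_mm in HUU0, HAh0, Hvv0, Hhh0, Hvh0. rename HUU0 into HUU, HAh0 into HAh, Hvv0 into Hvv, Hhh0 into Hhh, Hvh0 into Hvh.
 rewrite tr_trm in Htv0, Hth0. rename Htv0 into Htv, Hth0 into Hth.
 assert (HGs : teq2 (mT G) G) by (apply sym_mT; auto).
 assert (HgT : teq2 (mT g) g) by (apply sym_mT; auto).
 assert (HvT : teq2 (mT v) v) by (apply sym_mT; auto).
 assert (HhT : teq2 (mT h) h) by (apply sym_mT; auto).
 assert (HAT : teq2 (mT A) A) by (apply sym_mT; auto).
 assert (HUa : teq2 (mT U) (scal2 (-1) U)) by (apply asym_mT; auto).
 assert (HGg : teq2 (mm G g) I4). { intros a b Ha Hb. apply Hinv; auto. }
 assert (HgG : teq2 (mm g G) I4) by (apply gG_inv; auto).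
 destruct (det_facts g G Hsig HGg) as [Hdg HdGg].
 assert (HUh : teq2 (mm (mm U G) h) zero2) by (eapply U_in_V; eauto).
 assert (HUsA := Usand g G v h U A HGs HGg HgG Hgvh HvT Hvv Htv HUa HUU HUh HAT HAh).
 destruct (W_facts g G v h U HgT HGs HGg HgG Hgvh Hvh Htv Hth HUas HUU HUh Hdg HdGg) as (HWv & HWW & HWT).
 set (W := hodge g G U) in *.
 assert (Hv : teq2 v (sub2 g h)). { intros a b Ha Hb. unfold sub2. rewrite (Hgvh a b Ha Hb). unfold add2. ring. }
 assert (Hh : teq2 h (sub2 g v)). { intros a b Ha Hb. unfold sub2. rewrite (Hgvh a b Ha Hb). unfold add2. ring. }
 assert (HvGA : teq2 (mm (mm v G) A) A).
 { assert (AGv : teq2 (mm (mm A G) v) A).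
   { rewrite Hv, mm_subr, HAh, mm_assoc, HGg, mm_I4r. lin. }
   pose proof (mT_proper _ _ AGv) as T. rewrite !mT_mm, HvT, HGs, HAT in T.
   rewrite mm_assoc. exact T. }
 assert (HWh : teq2 (mm (mm W G) h) W).
 { rewrite Hh, mm_subr, HWv, mm_assoc, HGg, mm_I4r. lin. }
 assert (HS : teq2 (act G (Sdf g G U) Ric) (sub2 (sub2 A (scal2 (trm (mm G A)) v)) (scal2 mu h))).
 { unfold Sdf. fold W. rewrite act_sub, !act_tprod. unfold Ric. rewrite HRic.
   rewrite HGs in HUsA. rewrite HGs, !mm_addr, !mm_addl, !mm_scalr, !mm_scall. rewrite HUsA.
   rewrite HUh, HWT.
   assert (E1' : teq2 (mm (mm (mm (mm W G) A) G) (scal2 (-1) W)) zero2).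
   { rewrite <- HvGA. rewrite !mm_assoc, (tail3 _ _ _ _ HWv), mm_zerol. reflexivity. }
   rewrite E1'. rewrite HWh, mm_scalr, HWW.
   intros a b _ _. unfold mm, add2, sub2, scal2, zero2, sum4. ring. }
 assert (Hr : r = trm (mm G A) + 2 * mu).
 { unfold r, scal. fold Ric. rewrite tr_trm. unfold Ric. rewrite HRic, mm_addr, mm_scalr, trm_add, trm_scal, Hth. ring. }
 assert (HB : teq2 B (scal2 beta Pi)).
 { unfold B. rewrite HS. unfold Ric. rewrite HRic. unfold beta, Pi. rewrite Hr.
   intros a b Ha Hb. unfold add2, sub2, scal2. rewrite (Hgvh a b Ha Hb). unfold add2. field. }
 assert (HhGv : teq2 (mm (mm h G) v) zero2).
 { pose proof (mT_proper _ _ Hvh) as T. rewrite !mT_mm, HvT, HGs, HhT, mT_zero in T.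
   rewrite mm_assoc. exact T. }
 assert (Hbz : teq2 B zero2 -> beta = 0).
 { intros HB0. rewrite HB in HB0. unfold Pi in HB0.
   pose proof (trm_proper _ _ (mm_proper _ _ (reflexivity G) _ _ (mm_proper _ _ (mm_proper _ _ HB0 _ _ (reflexivity G)) _ _ (reflexivity v)))) as T.
   rewrite mm_zerol, mm_zerol, mm_zeror, trm_zero, mm_scall, mm_scall, mm_subl, mm_subl, Hvv, HhGv, mm_scalr, trm_scal in T.
   assert (trm (mm G (sub2 v zero2)) = 2).
   { rewrite mm_subr, mm_zeror, trm_sub, Htv, trm_zero. ring. }
   rewrite H in T. lra. }
 split; [exact HB|]. split; [unfold beta; field|]. split; [exact Hbz|].
 intros HBn x Hx eps.
 assert (Hbeta : beta <> 0).
 { intro Z. apply HBn. rewrite HB, Z. intros a b _ _. unfold scal2, zero2. ring. }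
 assert (Htr : tr G (dot G B B) = 4 * beta^2).
 { assert (HP2 : teq2 (mm (mm (sub2 v h) G) (sub2 v h)) (add2 v h)).
   { rewrite !mm_subl, !mm_subr, Hvv, Hvh, HhGv, Hhh. lin. }
   rewrite tr_trm, dot_mm, HB. unfold Pi.
   rewrite ?mm_scall, ?mm_scalr, ?mm_scall, ?mm_scalr, ?mm_scall, ?mm_scalr, HP2, !trm_scal, mm_addr, trm_add, Htv, Hth. ring. }
 assert (Hq : quad B x = beta * (quad v x - quad h x)).
 { rewrite (quad_ext _ _ x HB). unfold Pi. rewrite quad_scal, quad_sub. reflexivity. }
 assert (Hgx : quad v x + quad h x = -1).
 { rewrite <- quad_add, <- (quad_ext _ _ x Hgvh). exact Hx. }
 pose proof (Hpsd x) as Hhx.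
 assert (Hw : quad v x - quad h x < 0) by lra.
 unfold eps. rewrite Htr, Hq.
 replace (4 * beta ^ 2) with (Rsqr (2 * beta)) by (unfold Rsqr; ring).
 rewrite sqrt_Rsqr_abs.
 destruct (Rlt_or_le 0 beta) as [Hp|Hn].
 - assert (beta * (quad v x - quad h x) < 0) by nra.
   rewrite (Rabs_left (beta * _)) by auto. rewrite Rabs_right by lra. field. lra.
 - assert (beta < 0) by lra.
   assert (beta * (quad v x - quad h x) > 0) by nra.
   rewrite (Rabs_right (beta * _)) by lra. rewrite Rabs_left by lra. field. lra.
Qed.
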